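(* Let $N$ be a finite set with $|N|\ge 2$. An inequality $\langle o,\eta\rangle\le u$, with $o\in\mathbb{R}^{\Upsilon}$ and $u\in\mathbb{R}$, is valid for all $\eta\in P_N$ and tight at every full graph over $N$ (i.e. $\langle o,\eta_H\rangle=u$ for each full graph $H$) if and only if there is a standardized supermodular set function $m:\mathcal{P}(N)\to\mathbb{R}$ such that $o(a|B)=m(\{a\}\cup B)-m(B)$ for all $a\in N$, $B\subseteq N\setminus\{a\}$, and $u$ is the common value of $\langle o,\eta_H\rangle$ over full graphs $H$. Moreover, this correspondence between such inequalities and standardized supermodular functions is one-to-one and preserves conic combinations.
   Context: $\mathrm{DAG}(N)$ is the set of acyclic directed graphs over $N$; $\mathrm{pa}_G(a)$ is the parent set of $a$ in $G$. A full graph is an acyclic directed graph over $N$ in which every pair of distinct nodes is adjacent. $\Upsilon=\{(a|B): a\in N,\ \emptyset\neq B\subseteq N\setminus\{a\}\}$; $\eta_G\in\mathbb{R}^{\Upsilon}$ has $\eta_G(a|B)=1$ if $B=\mathrm{pa}_G(a)$, else $0$; $P_N=\mathrm{conv}\{\eta_G:G\in\mathrm{DAG}(N)\}$. Convention: $o(b|\emptyset)=0$. A set function $m:\mathcal{P}(N)\to\mathbb{R}$ is standardized if $m(S)=0$ for $|S|\le1$, and supermodular if $m(U)+m(V)\le m(U\cup V)+m(U\cap V)$ for all $U,V\subseteq N$. *)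

(* Defs.v *)
From HB Require Import structures.
From mathcomp Require Import all_boot all_order all_algebra.
Set Implicit Arguments. Unset Strict Implicit. Unset Printing Implicit Defensive.
Import Order.TTheory GRing.Theory Num.Theory.
Local Open Scope ring_scope.

Section Defs.
Variable N : finType.

(* A directed graph over N, given by its parent sets: pa G a = pa_G(a). *)
Definition graph := {ffun N -> {set N}}.

Definition edge (G : graph) : rel N := fun x y => x \in G y.

Definition acyclic (G : graph) : bool :=
  [forall x, ~~ [exists y, edge G x y && connect (edge G) y x]].

Definition full_graph (G : graph) : bool :=
  acyclic G && [forall a, forall b, (a != b) ==> (edge G a b || edge G b a)].

Definition ups_pred (p : N * {set N}) : bool := (p.2 != set0) && (p.1 \notin p.2).
Definition Ups : finType := {p : N * {set N} | ups_pred p}.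

Definition ups_node (v : Ups) : N := (val v).1.
Definition ups_set (v : Ups) : {set N} := (val v).2.

Variable R : realFieldType.

Definition eta (G : graph) : {ffun Ups -> R} :=
  [ffun v => if G (ups_node v) == ups_set v then 1 else 0].

Definition dot (o eta' : {ffun Ups -> R}) : R := \sum_(v : Ups) o v * eta' v.

Definition in_PN (e : {ffun Ups -> R}) : Prop :=
  exists lam : graph -> R,
    (forall G, 0 <= lam G) /\
    (forall G, ~~ acyclic G -> lam G = 0) /\
    \sum_(G : graph | acyclic G) lam G = 1 /\
    e = [ffun v => \sum_(G : graph | acyclic G) lam G * eta G v].

Definition valid_ineq (o : {ffun Ups -> R}) (u : R) : Prop :=
  forall e, in_PN e -> dot o e <= u.

Definition tight_full (o : {ffun Ups -> R}) (u : R) : Prop :=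
  forall H : graph, full_graph H -> dot o (eta H) = u.

Definition standardized (m : {ffun {set N} -> R}) : Prop :=
  forall S : {set N}, (#|S| <= 1)%N -> m S = 0.

Definition supermodular (m : {ffun {set N} -> R}) : Prop :=
  forall U V : {set N}, m U + m V <= m (U :|: V) + m (U :&: V).

Definition corr (o : {ffun Ups -> R}) (u : R) (m : {ffun {set N} -> R}) : Prop :=
  (forall v : Ups, o v = m (ups_node v |: ups_set v) - m (ups_set v)) /\
  (forall H : graph, full_graph H -> u = dot o (eta H)).

End Defs.

(* Main.v *)
Require Import Defs.
From HB Require Import structures.
From mathcomp Require Import all_boot all_order all_algebra.
From mathcomp Require Import zify ring lra.
Import Order.TTheory GRing.Theory Num.Theory.
Set Implicit Arguments. Unset Strict Implicit. Unset Printing Implicit Defensive.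
Lemma ltn_blk (b1 b2 c1 c2 n : nat) : (c1 < n)%N -> (c2 < n)%N ->
  (b1 * n + c1 < b2 * n + c2)%N = (b1 < b2)%N || ((b1 == b2) && (c1 < c2)%N).
Proof.
move=> h1 h2; case: (ltngtP b1 b2) => h /=.
- apply/idP; have : (b1.+1 * n <= b2 * n)%N by rewrite leq_mul2r h orbT.
  rewrite mulSn; lia.
- apply/negbTE; rewrite -leqNgt; have : (b2.+1 * n <= b1 * n)%N by rewrite leq_mul2r h orbT.
  rewrite mulSn; lia.
- by rewrite h ltn_add2l.
Qed.

Definition cr (N : finType) (x : N) : nat := @enum_rank N x.
Lemma cr_lt (N : finType) (x : N) : (cr x < #|N|)%N.
Proof. by rewrite /cr; case: (enum_rank x) => /= i; rewrite cardE. Qed.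
Lemma cr_inj (N : finType) : injective (@cr N).
Proof. by move=> x y /val_inj /enum_rank_inj. Qed.

Definition blk (N : finType) (A B C : {set N}) (x : N) : nat :=
  if x \in A then 0 else if x \in B then 1 else if x \in C then 2 else 3.
Definition rk (N : finType) (A B C : {set N}) (x : N) : nat :=
  blk A B C x * #|N| + cr x.

Lemma rk_lt (N : finType) (A B C : {set N}) x y :
  (rk A B C x < rk A B C y)%N =
  (blk A B C x < blk A B C y)%N || ((blk A B C x == blk A B C y) && (cr x < cr y)%N).
Proof. by rewrite /rk ltn_blk ?cr_lt. Qed.

Lemma rk_inj (N : finType) (A B C : {set N}) : injective (rk A B C).
Proof.
move=> x y e.
have h1 := rk_lt A B C x y; have h2 := rk_lt A B C y x.
rewrite e ltnn in h1 h2.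
case: (ltngtP (blk A B C x) (blk A B C y)) h1 h2 => //= hb.
move=> /esym/negbT h1 /esym/negbT h2; apply: cr_inj; apply/eqP.
lia.
Qed.

Definition Gr (N : finType) (r : N -> nat) : graph N :=
  [ffun a => [set x | (r x < r a)%N]].

Lemma acyc_rank (N : finType) (G : graph N) (r : N -> nat) :
  (forall x y, x \in G y -> (r x < r y)%N) -> acyclic G.
Proof.
move=> hr.
have key : forall p z, path (edge G) z p -> (r z <= r (last z p))%N.
  elim=> //= z p IH y /andP [hyz hp].
  exact: leq_trans (ltnW (hr _ _ hyz)) (IH _ hp).
apply/forallP => x; apply/negP => /existsP [y /andP [exy /connectP [p hp ex]]].
have := key _ _ hp.
by rewrite -ex leqNgt (hr _ _ exy).
Qed.

Lemma full_Gr (N : finType) (r : N -> nat) : injective r -> full_graph (Gr r).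
Proof.
move=> ir; apply/andP; split.
  by apply: (acyc_rank (r := r)) => x y; rewrite ffunE inE.
apply/forallP => a; apply/forallP => b; apply/implyP => nab.
rewrite /edge !ffunE !inE.
case: (ltngtP (r a) (r b)) => // /ir e; by rewrite e eqxx in nab.
Qed.

Lemma noloop (N : finType) (G : graph N) a : acyclic G -> a \notin G a.
Proof.
move/forallP/(_ a) => h; apply/negP => ha; move/existsP: h; apply.
by exists a; rewrite /edge ha connect0.
Qed.

Lemma sink_exists (N : finType) (G : graph N) (S : {set N}) :
  acyclic G -> S != set0 -> exists2 w, w \in S & forall x, x \in S -> w \notin G x.
Proof.
move=> hac /set0Pn [x0 hx0].
pose reach y := [set z | connect (edge G) y z].
case: (@arg_minnP _ x0 (mem S) (fun y => #|reach y|) hx0) => w hw hmin.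
exists w => // x hx; apply/negP => hwx.
have := hmin x hx; rewrite leqNgt => /negP; apply; apply: proper_card.
apply/properP; split.
  apply/subsetP => z; rewrite !inE => hz.
  exact: connect_trans (connect1 _) hz.
exists w; rewrite !inE ?connect0 //.
apply/negP => hxw; move/forallP/(_ w): hac => /existsP; apply.
by exists x; rewrite /edge hwx hxw.
Qed.
Local Open Scope ring_scope.

Definition oo (N : finType) (R : realFieldType) (o : {ffun Ups N -> R}) (a : N) (B : {set N}) : R :=
  \sum_(v : Ups N | val v == (a, B)) o v.

Lemma dotE (N : finType) (R : realFieldType) (o : {ffun Ups N -> R}) (G : graph N) :
  dot o (Defs.eta R G) = \sum_a oo o a (G a).
Proof.
rewrite /dot; under eq_bigr do rewrite ffunE.
rewrite (partition_big (@ups_node N) xpredT) //=.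
apply: eq_bigr => a _; rewrite /oo big_mkcond [RHS]big_mkcond; apply: eq_bigr => v _.
rewrite /ups_node /ups_set; case: (val v) => x B /=; rewrite xpair_eqE.
case: (x =P a) => [->|] /=; last by [].
by rewrite eq_sym; case: (B == G a); rewrite ?mulr1 ?mulr0.
Qed.

Lemma oo_val (N : finType) (R : realFieldType) (o : {ffun Ups N -> R}) (v : Ups N) :
  oo o (val v).1 (val v).2 = o v.
Proof.
by rewrite /oo (big_pred1 v).
Qed.

Lemma oo_empty (N : finType) (R : realFieldType) (o : {ffun Ups N -> R}) a :
  oo o a set0 = 0.
Proof.
rewrite /oo big_pred0 // => w; apply/negbTE; case: w => [[x B] /= /andP [hB _]].
by apply/eqP => -[_ eB]; rewrite eB eqxx in hB.
Qed.

Lemma oo_nonempty (N : finType) (R : realFieldType) (o : {ffun Ups N -> R}) (a : N) (B : {set N})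
  (hB : B != set0) (ha : a \notin B) :
  exists v : Ups N, val v = (a, B) /\ oo o a B = o v.
Proof.
have hp : ups_pred (a, B) by rewrite /ups_pred /= hB ha.
exists (exist _ (a, B) hp); split => //.
by rewrite -(oo_val o (exist _ (a, B) hp)).
Qed.

Lemma oo_corr (N : finType) (R : realFieldType) (o : {ffun Ups N -> R})
  (m : {ffun {set N} -> R}) (a : N) (B : {set N}) :
  standardized m ->
  (forall v : Ups N, o v = m (ups_node v |: ups_set v) - m (ups_set v)) ->
  a \notin B -> oo o a B = m (a |: B) - m B.
Proof.
move=> hs ho ha; have [->|hB] := eqVneq B set0.
  by rewrite oo_empty setU0 !hs ?cards1 ?cards0 // subr0.
by have [v [ev ->]] := oo_nonempty o hB ha; rewrite ho /ups_node /ups_set ev.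
Qed.

Lemma sum_leG (N : finType) (R : realFieldType) (m : {ffun {set N} -> R}) (G : graph N) :
  standardized m -> supermodular m -> acyclic G ->
  forall S : {set N}, (forall a, a \in S -> G a \subset S) ->
  \sum_(a in S) (m (a |: G a) - m (G a)) <= m S.
Proof.
move=> hs hsm hac S; move Hn: #|S| => n; elim: n S Hn => [|n IH] S Hn hanc.
  move/eqP: Hn; rewrite cards_eq0 => /eqP ->.
  by rewrite big_set0 hs ?cards0.
have hS : S != set0 by rewrite -card_gt0 Hn.
have [w hw hsink] := sink_exists hac hS.
rewrite (big_setD1 w hw) /=.
have hcard : #|S :\ w| = n by move: Hn; rewrite (cardsD1 w S) hw add1n => -[].
have hanc' : forall a, a \in S :\ w -> G a \subset S :\ w.
  move=> a; rewrite inE => /andP [_ ha]; apply/subsetP => z hz.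
  rewrite !inE (subsetP (hanc a ha)) // andbT; apply/eqP => ezw.
  by move: (hsink a ha); rewrite -ezw hz.
have := IH _ hcard hanc'.
have hnw := noloop w hac.
have hGw := subsetP (hanc w hw).
have e1 : (w |: G w) :|: (S :\ w) = S.
  apply/setP => z; rewrite !inE; case: (z =P w) => [->|nzw] /=; first by rewrite hw.
  by apply/idP/idP => [/orP [/hGw|]|->] //; rewrite orbT.
have e2 : (w |: G w) :&: (S :\ w) = G w.
  apply/setP => z; rewrite !inE; case: (z =P w) => [->|nzw] /=; first by rewrite (negbTE hnw).
  by apply/idP/idP => [/andP []|hz] //; rewrite hz hGw.
have := hsm (w |: G w) (S :\ w); rewrite e1 e2 => h1 h2.
lra.
Qed.

Lemma sum_eqG (N : finType) (R : realFieldType) (m : {ffun {set N} -> R}) (G : graph N) :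
  standardized m -> acyclic G ->
  forall S : {set N}, (forall a, a \in S -> G a \subset S) ->
  (forall a b, a \in S -> b \in S -> a != b -> (a \in G b) || (b \in G a)) ->
  \sum_(a in S) (m (a |: G a) - m (G a)) = m S.
Proof.
move=> hs hac S; move Hn: #|S| => n; elim: n S Hn => [|n IH] S Hn hanc hadj.
  move/eqP: Hn; rewrite cards_eq0 => /eqP ->.
  by rewrite big_set0 hs ?cards0.
have hS : S != set0 by rewrite -card_gt0 Hn.
have [w hw hsink] := sink_exists hac hS.
rewrite (big_setD1 w hw) /=.
have hcard : #|S :\ w| = n by move: Hn; rewrite (cardsD1 w S) hw add1n => -[].
have hanc' : forall a, a \in S :\ w -> G a \subset S :\ w.
  move=> a; rewrite inE => /andP [_ ha]; apply/subsetP => z hz.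
  rewrite !inE (subsetP (hanc a ha)) // andbT; apply/eqP => ezw.
  by move: (hsink a ha); rewrite -ezw hz.
have hadj' : forall a b, a \in S :\ w -> b \in S :\ w -> a != b -> (a \in G b) || (b \in G a).
  by move=> a b; rewrite !inE => /andP [_ ha] /andP [_ hb]; apply: hadj.
rewrite (IH _ hcard hanc' hadj').
have hnw := noloop w hac.
have hGw := subsetP (hanc w hw).
have e : G w = S :\ w.
  apply/setP => z; rewrite !inE; case: (z =P w) => [->|nzw] /=; first by rewrite (negbTE hnw).
  apply/idP/idP => [/hGw //|hz].
  have := hadj z w hz hw (introN eqP nzw); rewrite (negbTE (hsink z hz)) orbF.
  by [].
by rewrite e setD1K // subrK.
Qed.
Local Open Scope ring_scope.

Lemma tight_rank (N : finType) (R : realFieldType) (o : {ffun Ups N -> R}) (u : R)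
  (r : N -> nat) : tight_full o u -> injective r ->
  \sum_a oo o a [set x | (r x < r a)%N] = u.
Proof.
move=> ht ir; rewrite -(ht _ (full_Gr ir)) dotE; apply: eq_bigr => a _.
by rewrite ffunE.
Qed.

Definition mo (N : finType) (R : realFieldType) (o : {ffun Ups N -> R}) : {ffun {set N} -> R} :=
  [ffun S : {set N} => \sum_(a in S) oo o a [set x | (rk S set0 set0 x < rk S set0 set0 a)%N]].

Lemma Kl (N : finType) (R : realFieldType) (o : {ffun Ups N -> R}) (u : R)
  (r : N -> nat) (S : {set N}) : tight_full o u -> injective r ->
  (forall x y, x \in S -> y \notin S -> (r x < r y)%N) ->
  \sum_(a in S) oo o a [set x | (r x < r a)%N] = mo o S.
Proof.
move=> ht ir hpre.
pose r1 := rk S set0 set0.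
pose M := (\sum_x r x).+1.
have hM : forall x, (r x < M)%N by move=> x; rewrite ltnS (bigD1 x) //= leq_addr.
pose r2 x := if x \in S then r x else (M + cr x)%N.
have ir2 : injective r2.
  move=> x y; rewrite /r2; case: (boolP (x \in S)); case: (boolP (y \in S)) => hy hx.
  - exact: ir.
  - by move=> e; have := hM x; rewrite e ltnNge leq_addr.
  - by move=> e; have := hM y; rewrite -e ltnNge leq_addr.
  - by move/addnI/cr_inj.
have E1 := tight_rank ht (@rk_inj _ S set0 set0).
have E2 := tight_rank ht ir2.
rewrite (bigID (mem S)) /= in E1; rewrite (bigID (mem S)) /= in E2.
have e_out : \sum_(a | a \notin S) oo o a [set x | (r1 x < r1 a)%N] =
             \sum_(a | a \notin S) oo o a [set x | (r2 x < r2 a)%N].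
  apply: eq_bigr => a ha; congr oo; apply/setP => x.
  rewrite !inE rk_lt /blk /r2 !inE (negbTE ha) /=.
  case: (boolP (x \in S)) => hx /=; first by rewrite ltn_addr.
  by rewrite ltn_add2l.
have e_in : \sum_(a in S) oo o a [set x | (r2 x < r2 a)%N] =
            \sum_(a in S) oo o a [set x | (r x < r a)%N].
  apply: eq_bigr => a ha; congr oo; apply/setP => x; rewrite !inE /r2 ha.
  case: (boolP (x \in S)) => hx //.
  have h1 : (r a < M + cr x)%N by rewrite ltn_addr.
  have h2 := hpre a x ha hx.
  by apply/idP/idP => h; exfalso; lia.
rewrite /mo ffunE -e_in.
move: E1 E2; rewrite e_out => E1 E2.
rewrite /r1 in E1.
lra.
Qed.
Local Open Scope ring_scope.

Lemma mo_corr (N : finType) (R : realFieldType) (o : {ffun Ups N -> R}) (u : R) :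
  tight_full o u -> forall v : Ups N,
  o v = mo o (ups_node v |: ups_set v) - mo o (ups_set v).
Proof.
move=> ht v; rewrite /ups_node /ups_set -(oo_val o v).
have := valP v; rewrite /ups_pred.
case: (val v) => a B /= /andP [hB ha].
have ir := @rk_inj _ B [set a] set0.
rewrite -(Kl ht ir) -?(Kl ht ir).
- rewrite big_setU1 //= addrK; congr oo; apply/setP => x.
  rewrite !inE rk_lt /blk !inE (negbTE ha) eqxx /=.
  case: (boolP (x \in B)) => hx //=.
  case: (x =P a) => [->|] //=; first by rewrite ltnn.
- move=> x y hx hy; rewrite rk_lt /blk hx (negbTE hy) !inE.
  by case: (y == a).
- move=> x y; rewrite !inE => hx /norP [hya hyB].
  rewrite rk_lt /blk !inE (negbTE hya) (negbTE hyB).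
  by case/orP: hx => [->|->] //=; case: (x \in B).
Qed.

Lemma mo_std (N : finType) (R : realFieldType) (o : {ffun Ups N -> R}) :
  standardized (mo o).
Proof.
move=> S hS; rewrite ffunE big1 // => a ha.
have -> : [set x | (rk S set0 set0 x < rk S set0 set0 a)%N] = set0.
  apply/setP => x; rewrite !inE rk_lt /blk ha !in_set0.
  case: (boolP (x \in S)) => hx //=.
  have := (card_le1P hS) a ha x; rewrite hx inE => /esym/eqP ->.
  by rewrite ltnn.
exact: oo_empty.
Qed.

Lemma mo_super (N : finType) (R : realFieldType) (o : {ffun Ups N -> R}) (u : R) :
  valid_ineq o u -> tight_full o u -> supermodular (mo o).
Proof.
move=> hv ht U V.
pose r := rk (U :&: V) (U :\: V) (V :\: U).
pose r' := rk (U :&: V) (V :\: U) (U :\: V).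
pose G : graph N := [ffun a => [set x | (r x < r a)%N && (r' x < r' a)%N]].
have hac : acyclic G.
  by apply: (acyc_rank (r := r)) => x y; rewrite ffunE inE => /andP [].
have hin : in_PN (Defs.eta R G).
  exists (fun H => if H == G then 1 else 0); split.
    by move=> H; case: eqP => _; [exact: ler01|exact: lexx].
  split.
    by move=> H hH; case: eqP => // eHG; rewrite eHG hac in hH.
  split.
    by rewrite (bigD1 G) //= eqxx big1 ?addr0 // => H /andP [_ /negbTE ->].
  apply/ffunP => v; rewrite [RHS]ffunE (bigD1 G) //= eqxx mul1r big1 ?addr0 // => H /andP [_ /negbTE ->].
  by rewrite mul0r.
have := hv _ hin; rewrite dotE.
pose f a := oo o a [set x | (r x < r a)%N].
pose f' a := oo o a [set x | (r' x < r' a)%N].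
have hg : forall a, oo o a (G a) = if a \in U then f a else if a \in V then f' a else f a.
  move=> a; rewrite /f /f'.
  case: (boolP (a \in U)) => hu; [|case: (boolP (a \in V)) => hw]; congr oo; apply/setP => x;
  rewrite ffunE !inE !rk_lt /blk !inE; move: hu; try move: hw;
  case: (a \in U); case: (a \in V); case: (x \in U); case: (x \in V);
  rewrite /= ?andbb ?andbT ?andbF //.
have ir := @rk_inj _ (U :&: V) (U :\: V) (V :\: U).
have ir' := @rk_inj _ (U :&: V) (V :\: U) (U :\: V).
have hU : \sum_a (if a \in U then f a else 0) = mo o U.
  rewrite -(Kl (S := U) ht ir); first by rewrite [RHS]big_mkcond.
  move=> x y.
  rewrite !rk_lt /blk !inE; case: (x \in U); case: (x \in V); case: (y \in U); case: (y \in V) => //.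
have hUV : \sum_a (if a \in U :|: V then f a else 0) = mo o (U :|: V).
  rewrite -(Kl (S := U :|: V) ht ir); first by rewrite [RHS]big_mkcond.
  move=> x y.
  rewrite !rk_lt /blk !inE; case: (x \in U); case: (x \in V); case: (y \in U); case: (y \in V) => //.
have hV : \sum_a (if a \in V then f' a else 0) = mo o V.
  rewrite -(Kl (S := V) ht ir'); first by rewrite [RHS]big_mkcond.
  move=> x y.
  rewrite !rk_lt /blk !inE; case: (x \in U); case: (x \in V); case: (y \in U); case: (y \in V) => //.
have hI : \sum_a (if a \in U :&: V then f' a else 0) = mo o (U :&: V).
  rewrite -(Kl (S := U :&: V) ht ir'); first by rewrite [RHS]big_mkcond.
  move=> x y.
  rewrite !rk_lt /blk !inE; case: (x \in U); case: (x \in V); case: (y \in U); case: (y \in V) => //.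
have hT : \sum_a f a = u by apply: tight_rank.
have hsum : \sum_a oo o a (G a) = \sum_a ((if a \in U then f a else 0) + (if a \in V then f' a else 0)
     - (if a \in U :&: V then f' a else 0) + f a - (if a \in U :|: V then f a else 0)).
  apply: eq_bigr => a _; rewrite hg !inE.
  case: (a \in U); case: (a \in V); rewrite /=; lra.
rewrite hsum sumrB big_split sumrB big_split /= hU hV hI hT hUV.
lra.
Qed.
Local Open Scope ring_scope.

Lemma dot_m (N : finType) (R : realFieldType) (o : {ffun Ups N -> R})
  (m : {ffun {set N} -> R}) (G : graph N) :
  standardized m -> acyclic G ->
  (forall v : Ups N, o v = m (ups_node v |: ups_set v) - m (ups_set v)) ->
  dot o (Defs.eta R G) = \sum_(a in [set: N]) (m (a |: G a) - m (G a)).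
Proof.
move=> hs hac ho; rewrite dotE [RHS](eq_bigl xpredT) => [|a]; last by rewrite inE.
by apply: eq_bigr => a _; apply: oo_corr => //; apply: noloop.
Qed.

Lemma u_val (N : finType) (R : realFieldType) (o : {ffun Ups N -> R}) (u : R)
  (m : {ffun {set N} -> R}) :
  standardized m -> corr o u m -> u = m [set: N].
Proof.
move=> hs [ho hu].
have hf := full_Gr (@cr_inj N).
rewrite (hu _ hf) (dot_m hs _ ho); last by case/andP: hf.
apply: sum_eqG.
- exact: hs.
- by case/andP: hf.
- by move=> a _; apply: subsetT.
- move=> a b _ _ nab; case/andP: hf => _ /forallP /(_ a) /forallP /(_ b).
  by rewrite nab /edge orbC.
Qed.

Lemma back (N : finType) (R : realFieldType) (o : {ffun Ups N -> R}) (u : R)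
  (m : {ffun {set N} -> R}) :
  standardized m -> supermodular m -> corr o u m -> valid_ineq o u /\ tight_full o u.
Proof.
move=> hs hsm hc; have hu := u_val hs hc; case: hc => ho hH; split; last first.
  by move=> H hf; rewrite -hH.
move=> e [lam [hl0 [hl1 [hl2 ->]]]].
have hle : forall G, acyclic G -> dot o (Defs.eta R G) <= u.
  move=> G hac; rewrite (dot_m hs hac ho) hu; apply: sum_leG => //.
have -> : dot o [ffun v => \sum_(G | acyclic G) lam G * Defs.eta R G v] =
          \sum_(G | acyclic G) lam G * dot o (Defs.eta R G).
  rewrite /dot; under eq_bigr do rewrite ffunE mulr_sumr.
  rewrite exchange_big /=; apply: eq_bigr => G _; rewrite mulr_sumr.
  by apply: eq_bigr => v _; rewrite mulrCA.
apply: le_trans (_ : \sum_(G | acyclic G) lam G * u <= u).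
  by apply: ler_sum => G hG; apply: ler_wpM2l => //; apply: hle.
by rewrite -big_distrl /= hl2 mul1r.
Qed.

Lemma uniq_m (N : finType) (R : realFieldType) (o : {ffun Ups N -> R}) (u : R)
  (m1 m2 : {ffun {set N} -> R}) :
  standardized m1 -> standardized m2 -> corr o u m1 -> corr o u m2 -> m1 = m2.
Proof.
move=> hs1 hs2 [h1 _] [h2 _]; apply/ffunP => S.
move: (leqnn #|S|); move: {2}#|S| => n; elim: n S => [|n IH] S hS.
  by rewrite !hs1 ?hs2 // (leq_trans hS).
case: (leqP #|S| 1) => hS1; first by rewrite hs1 ?hs2.
have : S != set0 by rewrite -card_gt0 (ltn_trans _ hS1).
case/set0Pn => a ha.
have hB : S :\ a != set0.
  by rewrite -card_gt0; move: hS1; rewrite (cardsD1 a S) ha add1n ltnS.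
have hna : a \notin S :\ a by rewrite !inE eqxx.
have [v [ev _]] := oo_nonempty o hB hna.
have := h1 v; rewrite h2 /ups_node /ups_set ev /= setD1K // => e.
have : m1 (S :\ a) = m2 (S :\ a).
  apply: IH; move: hS; rewrite (cardsD1 a S) ha add1n ltnS => //.
lra.
Qed.

Unset Implicit Arguments.

Theorem lemma7 (R : realFieldType) (N : finType) (hN : (1 < #|N|)%N) :
  (* characterization *)
  (forall (o : {ffun Ups N -> R}) (u : R),
      (valid_ineq o u /\ tight_full o u) <->
      (exists m : {ffun {set N} -> R},
          standardized m /\ supermodular m /\ corr o u m))
  /\
  (* one-to-one: m determines (o,u) ... *)
  (forall (o1 o2 : {ffun Ups N -> R}) (u1 u2 : R) (m : {ffun {set N} -> R}),
      standardized m -> corr o1 u1 m -> corr o2 u2 m -> o1 = o2 /\ u1 = u2)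
  /\
  (* ... and (o,u) determines the standardized m *)
  (forall (o : {ffun Ups N -> R}) (u : R) (m1 m2 : {ffun {set N} -> R}),
      standardized m1 -> standardized m2 -> corr o u m1 -> corr o u m2 -> m1 = m2)
  /\
  (* conic combinations are preserved *)
  (forall (k : nat) (c : 'I_k -> R) (os : 'I_k -> {ffun Ups N -> R})
          (us : 'I_k -> R) (ms : 'I_k -> {ffun {set N} -> R}),
      (forall i, 0 <= c i) ->
      (forall i, corr (os i) (us i) (ms i)) ->
      corr [ffun v => \sum_(i < k) c i * os i v] (\sum_(i < k) c i * us i)
           [ffun S => \sum_(i < k) c i * ms i S]).
Proof.
split.
  move=> o u; split.
    case=> hv ht; exists (mo o); split; first exact: mo_std.
    split; first exact: (mo_super hv ht).
    split; first exact: (mo_corr ht).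
    by move=> H hH; rewrite ht.
  by case=> m [hs [hsm hc]]; exact: (back hs hsm hc).
split.
  move=> o1 o2 u1 u2 m hs [h1 hu1] [h2 hu2]; split.
    by apply/ffunP => v; rewrite h1 h2.
  by rewrite (u_val hs (conj h1 hu1)) (u_val hs (conj h2 hu2)).
split.
  by move=> o u m1 m2; apply: uniq_m.
move=> k c os us ms hc hcorr; split.
  move=> v; rewrite !ffunE -sumrB; apply: eq_bigr => i _.
  by rewrite (hcorr i).1 mulrBr.
move=> H hH; rewrite /dot [RHS](eq_bigr (fun v => \sum_(i < k) c i * os i v * Defs.eta R H v)); last first.
  by move=> v _; rewrite ffunE mulr_suml.
rewrite [RHS]exchange_big /=; apply: eq_bigr => i _.
rewrite ((hcorr i).2 H hH) /dot mulr_sumr; apply: eq_bigr => v _.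
by rewrite mulrA.
Qed.
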